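(* Let $\mathscr{A}=\{a,b\}$, let $S$ be the Fibonacci substitution $a\mapsto ab$, $b\mapsto a$, and let $\Xi$ be the associated Fibonacci subshift. For $k\in\mathbb{N}$ let $\eta^a_k=(S^k(a))^\infty$ and $\eta^b_k=(S^k(b))^\infty$ and let $\Xi^a_k=\mathrm{Orb}(\eta^a_k)$, $\Xi^b_k=\mathrm{Orb}(\eta^b_k)$. Then $\Xi$ is periodically approximable and both sequences $(\Xi^a_k)_k$ and $(\Xi^b_k)_k$ converge to $\Xi$ in the Hausdorff topology.
   Context: $S$ extends to finite words as a homomorphism for concatenation. The Fibonacci subshift is $\Xi=\{\xi\in\mathscr{A}^{\mathbb{Z}}:\text{every finite subword of }\xi\text{ is a subword of some }S^n(c),\ n\in\mathbb{N},\ c\in\mathscr{A}\}$. For a finite word $u$, $u^\infty$ is the two-sided periodic sequence repeating $u$. $\mathscr{A}^{\mathbb{Z}}$ has the product topology and shift $(T\xi)(j)=\xi(j-1)$, $\mathrm{Orb}(\eta)=\{T^n\eta:n\in\mathbb{Z}\}$. Subshifts (non-empty closed $T$-invariant subsets) carry the Hausdorff (Vietoris) topology (basis: $\{\Xi:\Xi\cap F=\emptyset,\Xi\cap O\neq\emptyset\ \forall O\in\mathcal{F}\}$, $F$ closed, $\mathcal{F}$ a finite family of open sets). Periodically approximable means being a limit of subshifts $\mathrm{Orb}(\eta)$ with $\eta$ periodic. *)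

(* Defs.v *)
From Stdlib Require Import ZArith List.
Import ListNotations.
Open Scope Z_scope.

Inductive letter : Type := a | b.

Definition config := Z -> letter.

Definition S (c : letter) : list letter :=
  match c with a => [a; b] | b => [a] end.
Definition Sw (w : list letter) : list letter := flat_map S w.
Definition Sn (n : nat) (w : list letter) : list letter := Nat.iter n Sw w.

Definition subword (u w : list letter) : Prop :=
  exists p s, w = p ++ u ++ s.

Definition factor (xi : config) (i : Z) (n : nat) : list letter :=
  map (fun j => xi (i + Z.of_nat j)) (seq 0 n).

Definition Xi (xi : config) : Prop :=
  forall (i : Z) (n : nat),
    exists (m : nat) (c : letter), subword (factor xi i n) (Sn m [c]).

(* u^oo : the two-sided periodic sequence repeating u (u(0) sits at 0). *)
Definition per (u : list letter) : config :=
  fun j => nth (Z.to_nat (j mod Z.of_nat (length u))) u a.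

Definition T (xi : config) : config := fun j => xi (j - 1).
Definition Tpow (n : Z) (xi : config) : config := fun j => xi (j - n).

Definition Orb (eta : config) : config -> Prop :=
  fun xi => exists n : Z, xi = Tpow n eta.

Definition periodic (eta : config) : Prop :=
  exists p : Z, 0 < p /\ forall j, eta (j + p) = eta j.

(* Product topology on A^Z (A discrete): O is open iff every point of O
   has a cylinder neighbourhood (agreement on [-n,n]) inside O. *)
Definition is_open (O : config -> Prop) : Prop :=
  forall xi, O xi -> exists n : nat,
    forall eta, (forall j, Z.abs j <= Z.of_nat n -> eta j = xi j) -> O eta.
Definition is_closed (F : config -> Prop) : Prop :=
  is_open (fun xi => ~ F xi).

Definition vietoris_basic (F : config -> Prop) (Fam : list (config -> Prop))
  (Y : config -> Prop) : Prop :=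
  (forall xi, Y xi -> ~ F xi) /\
  (forall O, In O Fam -> exists xi, Y xi /\ O xi).

(* Convergence of a sequence of subshifts in the Hausdorff (Vietoris)
   topology: every basic open neighbourhood of the limit eventually
   contains the sequence. *)
Definition vietoris_converges (Xs : nat -> config -> Prop) (X : config -> Prop)
  : Prop :=
  forall (F : config -> Prop) (Fam : list (config -> Prop)),
    is_closed F -> (forall O, In O Fam -> is_open O) ->
    vietoris_basic F Fam X ->
    exists N : nat, forall k : nat, (N <= k)%nat -> vietoris_basic F Fam (Xs k).

Definition periodically_approximable (X : config -> Prop) : Prop :=
  exists eta : nat -> config,
    (forall k, periodic (eta k)) /\ vietoris_converges (fun k => Orb (eta k)) X.

Definition eta_a (k : nat) : config := per (Sn k [a]).
Definition eta_b (k : nat) : config := per (Sn k [b]).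

(* Main.v *)
Require Import Defs.
From Stdlib Require Import ZArith List Lia Classical ClassicalEpsilon Arith.
Import ListNotations.
Open Scope Z_scope.

Definition legal (w : list letter) : Prop := exists m c, subword w (Sn m [c]).

Lemma subword_trans u v w : subword u v -> subword v w -> subword u w.
Proof.
  intros [p [s H1]] [p' [s' H2]]. subst.
  exists (p' ++ p), (s ++ s'). rewrite !app_assoc. reflexivity.
Qed.

Lemma subword_refl u : subword u u.
Proof. exists [], []. rewrite app_nil_r. reflexivity. Qed.

Lemma Sw_app u v : Sw (u ++ v) = Sw u ++ Sw v.
Proof. unfold Sw. apply flat_map_app. Qed.

Lemma Sn_app k u v : Sn k (u ++ v) = Sn k u ++ Sn k v.
Proof. induction k; simpl; auto. unfold Sn in *. simpl. rewrite IHk. apply Sw_app. Qed.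

Lemma Sn_add k m w : Sn (k + m) w = Sn k (Sn m w).
Proof. unfold Sn. apply Nat.iter_add. Qed.

Lemma Sn_succ m w : Sn (Datatypes.S m) w = Sn m (Sw w).
Proof. rewrite <- Nat.add_1_r, Sn_add. reflexivity. Qed.

Lemma subword_Sn k u v : subword u v -> subword (Sn k u) (Sn k v).
Proof. intros [p [s H]]. subst. exists (Sn k p), (Sn k s). rewrite !Sn_app. reflexivity. Qed.

Lemma legal_sub u v : subword u v -> legal v -> legal u.
Proof. intros H [m [c H']]. exists m, c. eapply subword_trans; eauto. Qed.

Lemma Sn_c_sub m c : subword (Sn m [c]) (Sn (Datatypes.S m) [a]).
Proof.
  rewrite Sn_succ. change (Sw [a]) with ([a] ++ [b]). rewrite Sn_app.
  destruct c.
  - exists [], (Sn m [b]). reflexivity.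
  - exists (Sn m [a]), []. rewrite app_nil_r. reflexivity.
Qed.

Lemma Sn_a_mono m k : (m <= k)%nat -> subword (Sn m [a]) (Sn k [a]).
Proof.
  induction 1. apply subword_refl.
  eapply subword_trans. apply IHle. apply Sn_c_sub.
Qed.

Lemma legal_sub_Sn w : legal w -> exists N, forall k, (N <= k)%nat -> subword w (Sn k [a]).
Proof.
  intros [m [c H]]. exists (Datatypes.S m). intros k Hk.
  eapply subword_trans. apply H. eapply subword_trans. apply Sn_c_sub. apply Sn_a_mono; auto.
Qed.

Lemma Sn_a_cons k : exists r, Sn k [a] = a :: r.
Proof.
  induction k. exists []. reflexivity.
  destruct IHk as [r Hr]. exists (b :: Sw r). simpl. unfold Sn in *. rewrite Hr. reflexivity.
Qed.

Lemma Sw_len w : (length w <= length (Sw w))%nat.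
Proof. induction w as [|[] w IH]; simpl; lia. Qed.

Lemma len_Sn_a k : (k + 1 <= length (Sn k [a]))%nat.
Proof.
  induction k. simpl. lia.
  destruct (Sn_a_cons k) as [r Hr].
  change (Sn (Datatypes.S k) [a]) with (Sw (Sn k [a])). rewrite Hr in *. simpl in *.
  pose proof (Sw_len r). lia.
Qed.

Lemma legal_aa k : legal (Sn k [a] ++ Sn k [a]).
Proof.
  exists (k + 3)%nat, a. rewrite Sn_add, <- Sn_app.
  apply subword_Sn. exists [a; b], [b]. reflexivity.
Qed.
Lemma map_seq_shift (g : nat -> letter) s t q :
  map (fun j => g (s + j)%nat) (seq t q) = map g (seq (s + t) q).
Proof.
  revert t. induction q; intros t; simpl; auto. rewrite IHq, Nat.add_succ_r. reflexivity.
Qed.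

Lemma factor_app x i p q : factor x i (p + q) = factor x i p ++ factor x (i + Z.of_nat p) q.
Proof.
  unfold factor. rewrite seq_app, map_app. f_equal.
  pose proof (map_seq_shift (fun j => x (i + Z.of_nat j)) p 0 q) as E.
  rewrite Nat.add_0_r in E. simpl. rewrite <- E.
  apply map_ext. intros j. f_equal. lia.
Qed.

Lemma factor_sub x i n i' n' : i <= i' -> i' + Z.of_nat n' <= i + Z.of_nat n ->
  subword (factor x i' n') (factor x i n).
Proof.
  intros H1 H2.
  replace n with (Z.to_nat (i' - i) + (n' + (n - Z.to_nat (i' - i) - n')))%nat by lia.
  rewrite factor_app, factor_app.
  exists (factor x i (Z.to_nat (i' - i))), (factor x (i + Z.of_nat (Z.to_nat (i' - i)) + Z.of_nat n') (n - Z.to_nat (i' - i) - n')).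
  do 2 f_equal. f_equal. lia.
Qed.

Lemma factor_length x i n : length (factor x i n) = n.
Proof. unfold factor. rewrite length_map, length_seq. reflexivity. Qed.

Lemma factor_nth x i n k d : (k < n)%nat -> nth k (factor x i n) d = x (i + Z.of_nat k).
Proof.
  intros Hk. unfold factor.
  rewrite nth_indep with (d' := (fun j => x (i + Z.of_nat j)) 0%nat) by (rewrite length_map, length_seq; lia).
  rewrite (map_nth (fun j => x (i + Z.of_nat j))), seq_nth by lia. reflexivity.
Qed.

Lemma factor_ext x y i n : (forall k, (k < n)%nat -> x (i + Z.of_nat k) = y (i + Z.of_nat k)) ->
  factor x i n = factor y i n.
Proof.
  intros H. unfold factor. apply map_ext_in. intros k Hk. apply in_seq in Hk. apply H. lia.
Qed.

Lemma factor_Tpow t e i n : factor (Tpow t e) i n = factor e (i - t) n.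
Proof. unfold factor, Tpow. apply map_ext. intros j. f_equal. lia. Qed.

Definition win (x : config) (n : nat) := factor x (- Z.of_nat n) (2 * n + 1).

Lemma Xi_of_windows x : (forall n, legal (win x n)) -> Xi x.
Proof.
  intros H i n. set (N := (Z.to_nat (Z.abs i) + n)%nat).
  destruct (H N) as [m [c Hm]]. exists m, c.
  eapply subword_trans; [|apply Hm]. unfold win. apply factor_sub; lia.
Qed.

Lemma take_nth (v : list letter) q m d : (q + m <= length v)%nat ->
  map (fun j => nth (q + j) v d) (seq 0 m) = firstn m (skipn q v).
Proof.
  revert q m. induction v as [|x v IH]; intros q m Hl.
  - simpl in Hl. assert (m = 0%nat) by lia. subst. destruct q; reflexivity.
  - destruct q.
    + destruct m. reflexivity. simpl.  f_equal.
      rewrite <- seq_shift, map_map. simpl in Hl.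
      specialize (IH 0%nat m ltac:(lia)). simpl in IH. rewrite <- IH. reflexivity.
    + simpl in Hl |- *. apply IH. lia.
Qed.

Lemma per_factor_sub u i m : (m <= length u)%nat -> (0 < length u)%nat ->
  subword (factor (per u) i m) (u ++ u).
Proof.
  intros Hm Hu. set (L := Z.of_nat (length u)).
  assert (HL : 0 < L) by (unfold L; lia).
  pose proof (Z.mod_pos_bound i L HL) as Hq.
  set (q := Z.to_nat (i mod L)).
  assert (E : factor (per u) i m = map (fun j => nth (q + j) (u ++ u) a) (seq 0 m)).
  { unfold factor. apply map_ext_in. intros j Hj. apply in_seq in Hj.
    unfold per. fold L.
    rewrite <- Z.add_mod_idemp_l by lia.
    destruct (Nat.lt_ge_cases (q + j) (length u)).
    - rewrite app_nth1 by lia. f_equal. rewrite Z.mod_small by lia. lia.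
    - rewrite app_nth2 by lia. f_equal.
      rewrite <- (Z.mod_add _ (-1) L) by lia.
      rewrite Z.mod_small by lia. lia. }
  rewrite E, take_nth by (rewrite length_app; lia).
  exists (firstn q (u ++ u)), (skipn m (skipn q (u ++ u))).
  rewrite !firstn_skipn. reflexivity.
Qed.
Section Compact.
Variable xs : nat -> config.

Definition good (n : nat) (g : config) : Prop :=
  forall N, exists L, (N <= L)%nat /\ forall j, Z.abs j < Z.of_nat n -> xs L j = g j.

Definition ext (n : nat) (g : config) (c1 c2 : letter) : config :=
  fun j => if Z.abs j <? Z.of_nat n then g j else if j <? 0 then c1 else c2.

Lemma good_step n g : good n g -> exists g', good (Datatypes.S n) g' /\
  forall j, Z.abs j < Z.of_nat n -> g' j = g j.
Proof.
  intros Hg.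
  assert (Hagree : forall c1 c2 j, Z.abs j < Z.of_nat n -> ext n g c1 c2 j = g j).
  { intros c1 c2 j Hj. unfold ext. destruct (Z.ltb_spec (Z.abs j) (Z.of_nat n)); [reflexivity|lia]. }
  destruct (classic (exists c1 c2, good (Datatypes.S n) (ext n g c1 c2))) as [[c1 [c2 H]]|H].
  - exists (ext n g c1 c2). split; auto.
  - exfalso.
    assert (HN : forall c1 c2, exists N, forall L, (N <= L)%nat ->
        ~ (forall j, Z.abs j < Z.of_nat (Datatypes.S n) -> xs L j = ext n g c1 c2 j)).
    { intros c1 c2. apply NNPP. intros Hc. apply H. exists c1, c2. intros N.
      apply NNPP. intros HN. apply Hc. exists N. intros L HL HL'. apply HN. exists L. auto. }
    destruct (HN a a) as [N1 H1]. destruct (HN a b) as [N2 H2].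
    destruct (HN b a) as [N3 H3]. destruct (HN b b) as [N4 H4].
    destruct (Hg (N1 + N2 + N3 + N4)%nat) as [L [HL HLg]].
    assert (K : forall j, Z.abs j < Z.of_nat (Datatypes.S n) ->
                 xs L j = ext n g (xs L (- Z.of_nat n)) (xs L (Z.of_nat n)) j).
    { intros j Hj. unfold ext. destruct (Z.ltb_spec (Z.abs j) (Z.of_nat n)). auto.
      destruct (Z.ltb_spec j 0); f_equal; lia. }
    destruct (xs L (- Z.of_nat n)), (xs L (Z.of_nat n)).
    + eapply H1; [|exact K]. lia.
    + eapply H2; [|exact K]. lia.
    + eapply H3; [|exact K]. lia.
    + eapply H4; [|exact K]. lia.
Qed.

Definition stepf (n : nat) (g : {g | good n g}) :
  {g' | good (Datatypes.S n) g' /\ forall j, Z.abs j < Z.of_nat n -> g' j = proj1_sig g j} :=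
  constructive_indefinite_description _ (good_step n (proj1_sig g) (proj2_sig g)).


Lemma good0 : good 0 (fun _ => a).
Proof. intros N. exists N. split. lia. intros j Hj. lia. Qed.

Fixpoint G (n : nat) : {g | good n g} :=
  match n with
  | O => exist _ (fun _ => a) good0
  | Datatypes.S n' => let s := stepf n' (G n') in exist _ (proj1_sig s) (proj1 (proj2_sig s))
  end.

Lemma G_mono k m j : (k <= m)%nat -> Z.abs j < Z.of_nat k -> proj1_sig (G m) j = proj1_sig (G k) j.
Proof.
  induction 1; intros Hj. reflexivity.
  simpl. rewrite (proj2 (proj2_sig (stepf m (G m)))) by lia. auto.
Qed.

Definition lim : config := fun j => proj1_sig (G (Datatypes.S (Z.to_nat (Z.abs j)))) j.

Lemma lim_G n j : Z.abs j < Z.of_nat n -> lim j = proj1_sig (G n) j.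
Proof. intros Hj. unfold lim. symmetry. apply G_mono; lia. Qed.

Lemma lim_good n : good n lim.
Proof.
  intros N. destruct (proj2_sig (G n) N) as [L [HL H]]. exists L. split; auto.
  intros j Hj. rewrite H by auto. symmetry. apply lim_G; auto.
Qed.
End Compact.

Lemma compactness (F : config -> Prop) : is_closed F -> (forall x, Xi x -> ~ F x) ->
  exists L, forall x, legal (win x L) -> ~ F x.
Proof.
  intros HF HX. apply NNPP. intros Hn.
  assert (H : forall L, exists x, legal (win x L) /\ F x).
  { intros L. apply NNPP. intros H. apply Hn. exists L. intros x Hx Fx. apply H. eauto. }
  set (xs := fun L => proj1_sig (constructive_indefinite_description _ (H L))).
  assert (Hxs : forall L, legal (win (xs L) L) /\ F (xs L)).
  { intros L. unfold xs. exact (proj2_sig (constructive_indefinite_description _ (H L))). }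
  set (x := lim xs).
  assert (Fx : F x).
  { apply NNPP. intros nF. destruct (HF x nF) as [n Hn'].
    destruct (lim_good xs (Datatypes.S n) 0%nat) as [L [_ HL]].
    apply (Hn' (xs L)). intros j Hj. apply HL. lia. apply Hxs. }
  apply (HX x); auto. apply Xi_of_windows. intros n.
  destruct (lim_good xs (Datatypes.S n) n) as [L [HnL HL]].
  apply legal_sub with (win (xs L) n).
  - unfold win. rewrite (factor_ext x (xs L)). apply subword_refl.
    intros k Hk. symmetry. apply HL. lia.
  - eapply legal_sub; [|apply (proj1 (Hxs L))]. unfold win. apply factor_sub; lia.
Qed.
Lemma list_eventually (P : nat -> (config -> Prop) -> Prop) (Fam : list (config -> Prop)) :
  (forall O, In O Fam -> exists N, forall k, (N <= k)%nat -> P k O) ->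
  exists N, forall k, (N <= k)%nat -> forall O, In O Fam -> P k O.
Proof.
  induction Fam as [|O0 Fam IH]; intros H.
  - exists 0%nat. intros k _ O [].
  - destruct (H O0 (or_introl eq_refl)) as [N0 H0].
    destruct IH as [N1 H1]. { intros O HO. apply H. right. auto. }
    exists (N0 + N1)%nat. intros k Hk O [<-|HO]. apply H0; lia. apply H1; auto; lia.
Qed.

Lemma conv_a : vietoris_converges (fun k => Orb (eta_a k)) Xi.
Proof.
  intros F Fam HF HFam [HX HO].
  destruct (compactness F HF HX) as [L HL].
  destruct (list_eventually (fun k O => exists xi, Orb (eta_a k) xi /\ O xi) Fam) as [N2 H2].
  { intros O InO. destruct (HO O InO) as [x [Xx Ox]].
    destruct (HFam O InO x Ox) as [n Hn].
    assert (Hw : legal (win x n)) by (apply Xx).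
    destruct (legal_sub_Sn _ Hw) as [N HN]. exists N. intros k Hk.
    destruct (HN k Hk) as [p [s Hu]].
    set (u := Sn k [a]) in *.
    exists (Tpow (- (Z.of_nat (length p) + Z.of_nat n)) (per u)). split.
    { eexists. reflexivity. }
    apply Hn. intros j Hj. unfold Tpow, per.
    assert (Hlu : length u = (length p + (2 * n + 1) + length s)%nat).
    { rewrite Hu, !length_app. unfold win. rewrite factor_length. lia. }
    rewrite Z.mod_small by lia.
    replace (Z.to_nat (j - - (Z.of_nat (length p) + Z.of_nat n))) with
      (length p + Z.to_nat (j + Z.of_nat n))%nat by lia.
    rewrite Hu, app_nth2 by lia. rewrite Nat.add_comm, Nat.add_sub.
    rewrite app_nth1 by (unfold win; rewrite factor_length; lia).
    unfold win. rewrite factor_nth by lia. f_equal. lia. }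
  exists (2 * L + 1 + N2)%nat. intros k Hk. split.
  - intros y [t ->]. apply HL. unfold win, eta_a. rewrite factor_Tpow.
    eapply legal_sub; [|apply (legal_aa k)]. apply per_factor_sub.
    pose proof (len_Sn_a k). lia. pose proof (len_Sn_a k). lia.
  - intros O InO. apply H2; auto. lia.
Qed.

Lemma eta_b_S k : eta_b (Datatypes.S k) = eta_a k.
Proof. unfold eta_b, eta_a. rewrite Sn_succ. reflexivity. Qed.

Lemma conv_b : vietoris_converges (fun k => Orb (eta_b k)) Xi.
Proof.
  intros F Fam HF HFam HB. destruct (conv_a F Fam HF HFam HB) as [N HN].
  exists (Datatypes.S N). intros k Hk. destruct k. lia.
  rewrite eta_b_S. apply HN. lia.
Qed.

Lemma per_periodic u : (0 < length u)%nat -> periodic (per u).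
Proof.
  intros H. exists (Z.of_nat (length u)). split. lia. intros j. unfold per.
  rewrite <- (Z.mod_add j 1) by lia. rewrite Z.mul_1_l. reflexivity.
Qed.

Theorem proposition14 :
  periodically_approximable Xi /\
  vietoris_converges (fun k => Orb (eta_a k)) Xi /\
  vietoris_converges (fun k => Orb (eta_b k)) Xi.
Proof.
  split; [|split; [apply conv_a|apply conv_b]].
  exists eta_a. split; [|apply conv_a].
  intros k. apply per_periodic. pose proof (len_Sn_a k). lia.
Qed.
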